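(* (Krieger–Shallit) For every real number $\alpha>1$ there exists an infinite sequence over a finite alphabet whose critical exponent equals $\alpha$.
   Context: If $X$ is a nonempty string and $Y$ is a prefix of $X$ (possibly empty), then any string $Z=X X\cdots X Y$ (one or more copies of $X$ followed by $Y$) is called a fractional power of $X$, and $|Z|/|X|$ is its exponent. The critical exponent of an infinite sequence $\omega$ is the least upper bound of the exponents of all fractional powers that occur as substrings (blocks of consecutive letters) of $\omega$. *)

(* Defs.v *)
From Stdlib Require Import Reals.
Open Scope R_scope.

(* An infinite sequence over alphabet A is a function nat -> A.
   [fractional_power_at w i n p] : the block w(i) w(i+1) ... w(i+n-1) of
   length n is a fractional power X X ... X Y with |X| = p >= 1
   (one or more copies of X, Y a possibly empty prefix of X), i.e.
   p <= n and each letter equals the letter p positions before it. *)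
Definition fractional_power_at {A : Type} (w : nat -> A) (i n p : nat) : Prop :=
  (1 <= p)%nat /\ (p <= n)%nat /\
  forall j : nat, (p <= j)%nat -> (j < n)%nat -> w (i + j)%nat = w (i + j - p)%nat.

Definition exponents {A : Type} (w : nat -> A) (r : R) : Prop :=
  exists i n p : nat, fractional_power_at w i n p /\ r = INR n / INR p.

Definition critical_exponent_eq {A : Type} (w : nat -> A) (alpha : R) : Prop :=
  is_lub (exponents w) alpha.

(* Main.v *)
Require Import Defs.
From Stdlib Require Import Reals.
Open Scope R_scope.
From Stdlib Require Import Arith Lia Lra ZArith Classical ClassicalEpsilon.

Section Ar.
Open Scope nat_scope.

Variable L : nat.
Hypothesis HL : 2 <= L.

Lemma powL_nz k : L ^ k <> 0.
Proof. apply Nat.pow_nonzero; lia. Qed.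

Lemma modw a b i j : i <= j -> a mod L ^ j = b mod L ^ j -> a mod L ^ i = b mod L ^ i.
Proof.
  intros Hij H.
  replace j with (i + (j - i)) in H by lia.
  rewrite Nat.pow_add_r, !Nat.Div0.mod_mul_r in H.
  apply (f_equal (fun x => x mod L ^ i)) in H.
  rewrite !(Nat.mul_comm (L ^ i)), !Nat.Div0.mod_add, !Nat.Div0.mod_mod in H. exact H.
Qed.

Lemma modw0 a i j : i <= j -> a mod L ^ j = 0 -> a mod L ^ i = 0.
Proof.
  intros Hij H. rewrite <- (Nat.Div0.mod_0_l (L ^ i)).
  apply (modw a 0 i j Hij). rewrite Nat.Div0.mod_0_l. exact H.
Qed.

Lemma val_exists p : 1 <= p -> exists t, p mod L ^ t = 0 /\ p mod L ^ (S t) <> 0.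
Proof.
  induction p as [p IH] using (well_founded_induction lt_wf). intros Hp.
  destruct (Nat.eq_dec (p mod L) 0) as [H0|H0].
  - assert (Hp' : p = L * (p / L)) by (apply Nat.Div0.div_exact; exact H0).
    assert (Hq1 : 1 <= p / L) by (destruct (p / L); lia).
    assert (Hqlt : p / L < p) by (apply Nat.div_lt; lia).
    destruct (IH (p / L) Hqlt Hq1) as [t' [Ht1 Ht2]].
    exists (S t'). rewrite Hp'. simpl (L ^ S t'). simpl (L ^ S (S t')).
    rewrite !Nat.Div0.mul_mod_distr_l. split.
    + rewrite Ht1. lia.
    + intro Hc. apply Nat.mul_eq_0 in Hc. destruct Hc; [lia|]. apply Ht2. simpl. exact H.
  - exists 0. rewrite Nat.pow_0_r, Nat.pow_1_r. split; [apply Nat.mod_1_r | exact H0].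
Qed.

Fixpoint nu_aux (f a : nat) : nat :=
  match f with
  | O => O
  | S f' => if Nat.eqb (a mod L) 0 then S (nu_aux f' (a / L)) else O
  end.
Definition nu a := nu_aux a a.

Lemma nu_aux_spec u : forall f a, u <= f -> a mod L ^ u = 0 -> a mod L ^ (S u) <> 0 -> nu_aux f a = u.
Proof.
  induction u as [|u IH]; intros f a Hf H1 H2.
  - destruct f; simpl; [reflexivity|]. simpl in H2. rewrite Nat.mul_1_r in H2.
    destruct (Nat.eqb_spec (a mod L) 0); [contradiction|reflexivity].
  - destruct f as [|f]; [lia|]. simpl.
    assert (HaL : a mod L = 0).
    { rewrite <- (Nat.pow_1_r L). apply (modw0 a 1 (S u)); [lia|exact H1]. }
    rewrite HaL. simpl. f_equal.
    assert (Hp' : a = L * (a / L)) by (apply Nat.Div0.div_exact; exact HaL).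
    rewrite Hp' in H1, H2. simpl (L ^ S u) in H1. simpl (L ^ S (S u)) in H2.
    rewrite Nat.Div0.mul_mod_distr_l in H1, H2.
    apply IH; [lia| |].
    + apply Nat.mul_eq_0 in H1. destruct H1; [lia|assumption].
    + intro Hc. apply H2. change (L * L ^ u) with (L ^ S u). rewrite Hc. lia.
Qed.

Lemma nu_spec a u : a mod L ^ u = 0 -> a mod L ^ (S u) <> 0 -> nu a = u.
Proof.
  intros H1 H2. unfold nu. apply nu_aux_spec; auto.
  apply Nat.Div0.mod_divides in H1. destruct H1 as [c Hc].
  assert (c <> 0) by (intro; subst; rewrite Nat.mul_0_r, Nat.Div0.mod_0_l in H2; lia).
  assert (u < L ^ u) by (apply Nat.pow_gt_lin_r; lia).
  assert (L ^ u <= L ^ u * c) by (destruct c; lia). lia.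
Qed.

Definition letter a := a mod L ^ 2 + ((a / L ^ (nu a)) mod L ^ 3) * L ^ 2.

Lemma letter_lt a : letter a < L ^ 5.
Proof.
  unfold letter.
  assert (H1 := Nat.mod_upper_bound a (L^2) (powL_nz 2)).
  assert (H2 := Nat.mod_upper_bound (a / L ^ nu a) (L^3) (powL_nz 3)).
  replace (L ^ 5) with (L ^ 3 * L ^ 2) by (rewrite <- Nat.pow_add_r; reflexivity).
  nia.
Qed.

Lemma letter_parts a b : letter a = letter b ->
  a mod L ^ 2 = b mod L ^ 2 /\ (a / L ^ (nu a)) mod L ^ 3 = (b / L ^ (nu b)) mod L ^ 3.
Proof.
  unfold letter. intros H.
  assert (H1 := Nat.mod_upper_bound a (L^2) (powL_nz 2)).
  assert (H1' := Nat.mod_upper_bound b (L^2) (powL_nz 2)).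
  split.
  - apply (f_equal (fun x => x mod L ^ 2)) in H.
    rewrite !Nat.Div0.mod_add, !Nat.Div0.mod_mod in H. exact H.
  - apply (f_equal (fun x => x / L ^ 2)) in H.
    rewrite !Nat.div_add in H by apply powL_nz.
    rewrite (Nat.div_small (a mod L^2)), (Nat.div_small (b mod L^2)) in H by assumption. exact H.
Qed.

Lemma breakL a b t : a mod L ^ t = b mod L ^ t -> a mod L ^ (S t) <> b mod L ^ (S t) ->
  (t < 2 \/ (2 <= t /\ a mod L ^ (t - 2) = 0 /\ a mod L ^ (t - 1) <> 0)) -> letter a <> letter b.
Proof.
  intros Ht HSt Hc Hl. apply letter_parts in Hl. destruct Hl as [H1 H2].
  destruct Hc as [Hc | [Hc [Ha1 Ha2]]].
  - apply HSt. apply (modw a b (S t) 2); [lia|exact H1].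
  - set (u := t - 2) in *.
    assert (Htu : t = u + 2) by lia.
    assert (Hu1 : t - 1 = S u) by lia. rewrite Hu1 in Ha2.
    assert (Hna : nu a = u) by (apply nu_spec; assumption).
    assert (Hb1 : b mod L ^ u = 0).
    { rewrite <- Ha1. symmetry. apply (modw a b u t); [lia|exact Ht]. }
    assert (Hb2 : b mod L ^ S u <> 0).
    { intro Hc'. apply Ha2. rewrite <- Hc'. apply (modw a b (S u) t); [lia|exact Ht]. }
    assert (Hnb : nu b = u) by (apply nu_spec; assumption).
    rewrite Hna, Hnb in H2.
    apply HSt.
    replace (S t) with (u + 3) by lia. rewrite Nat.pow_add_r.
    assert (Ea : a = L ^ u * (a / L ^ u)) by (apply Nat.Div0.div_exact; exact Ha1).
    assert (Eb : b = L ^ u * (b / L ^ u)) by (apply Nat.Div0.div_exact; exact Hb1).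
    rewrite Ea at 1. rewrite Eb at 1.
    rewrite !Nat.Div0.mul_mod_distr_l.
    rewrite H2. reflexivity.
Qed.

Lemma cancel_mod b q M : M <> 0 -> q mod M <> 0 -> (b + q) mod M <> b mod M.
Proof.
  intros HM Hq. rewrite Nat.Div0.add_mod.
  assert (Hr := Nat.mod_upper_bound b M HM).
  assert (Hs := Nat.mod_upper_bound q M HM).
  set (r := b mod M) in *. set (s := q mod M) in *.
  destruct (Nat.lt_ge_cases (r + s) M) as [Hlt|Hge].
  - rewrite Nat.mod_small by lia. lia.
  - replace (r + s) with ((r + s - M) + 1 * M) by lia.
    rewrite Nat.Div0.mod_add, Nat.mod_small by lia. lia.
Qed.

Lemma candidate s e : 1 <= e -> exists o, s <= o < s + L ^ e /\ o mod L ^ e = L ^ (e - 1).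
Proof.
  intros He.
  set (M := L ^ e). set (h := L ^ (e - 1)).
  assert (HhM : h < M).
  { unfold h, M. apply Nat.pow_lt_mono_r; lia. }
  assert (HM : M <> 0) by apply powL_nz.
  assert (Hd := Nat.div_mod s M HM).
  assert (Hm := Nat.mod_upper_bound s M HM).
  set (c := s / M) in *.
  destruct (Nat.le_gt_cases s (M * c + h)) as [H1|H1].
  - exists (h + c * M). split; [lia|].
    rewrite Nat.Div0.mod_add, Nat.mod_small by lia. reflexivity.
  - exists (h + (c + 1) * M). split; [lia|].
    rewrite Nat.Div0.mod_add, Nat.mod_small by lia. reflexivity.
Qed.

Lemma cong_facts p t fj gj j : p mod L ^ t = 0 -> p mod L ^ S t <> 0 ->
  (exists c, fj + c * L ^ S t = j) -> (exists c, gj + p + c * L ^ S t = j) ->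
  fj mod L ^ t = gj mod L ^ t /\ fj mod L ^ S t <> gj mod L ^ S t.
Proof.
  intros Hp1 Hp2 [c1 Hc1] [c2 Hc2].
  assert (Ef : fj mod L ^ S t = j mod L ^ S t) by (rewrite <- Hc1, Nat.Div0.mod_add; reflexivity).
  assert (Eg : (gj + p) mod L ^ S t = j mod L ^ S t) by (rewrite <- Hc2, Nat.Div0.mod_add; reflexivity).
  split.
  - rewrite (modw fj j t (S t)) by (lia || exact Ef).
    rewrite <- (modw (gj + p) j t (S t)) by (lia || exact Eg).
    assert (Ep : p = L ^ t * (p / L ^ t)) by (apply Nat.Div0.div_exact; exact Hp1).
    rewrite Ep, Nat.mul_comm, Nat.Div0.mod_add. reflexivity.
  - rewrite Ef, <- Eg. apply cancel_mod; [apply powL_nz|exact Hp2].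
Qed.

Lemma piece p t s l (f g : nat -> nat) : p mod L ^ t = 0 -> p mod L ^ S t <> 0 ->
  (forall j, s <= j < s + l -> (exists c, f j + c * L ^ S t = j) /\
      (exists c, g j + p + c * L ^ S t = j) /\ letter (f j) = letter (g j)) ->
  L * l <= p.
Proof.
  intros Hp1 Hp2 Hall.
  assert (Hpge : L ^ t <= p).
  { apply Nat.Div0.mod_divides in Hp1. destruct Hp1 as [c Hc].
    destruct c; [rewrite Hc, Nat.mul_0_r, Nat.Div0.mod_0_l in Hp2; lia|]. nia. }
  destruct (Nat.lt_ge_cases t 2) as [Ht|Ht].
  - destruct l as [|l]; [lia|].
    destruct (Hall s ltac:(lia)) as [H1 [H2 H3]].
    destruct (cong_facts p t (f s) (g s) s Hp1 Hp2 H1 H2) as [C1 C2].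
    exfalso. revert H3. apply breakL with t; auto.
  - destruct (Nat.le_gt_cases (L * l) p) as [Hle|Hgt]; [exact Hle|exfalso].
    destruct t as [|[|t]]; [lia|lia|].
    assert (Hl : L ^ S t < l).
    { simpl in Hpge. simpl. nia. }
    destruct (candidate s (S t)) as [o [Ho1 Ho2]]; [lia|].
    destruct (Hall o ltac:(lia)) as [H1 [H2 H3]].
    destruct (cong_facts p (S (S t)) (f o) (g o) o Hp1 Hp2 H1 H2) as [C1 C2].
    revert H3. apply breakL with (S (S t)); auto.
    right. split; [lia|].
    destruct H1 as [c1 Hc1].
    assert (Ef : f o mod L ^ S t = o mod L ^ S t).
    { rewrite <- Hc1 at 2. replace (S (S (S t))) with (2 + S t) by lia.
      rewrite Nat.pow_add_r, Nat.mul_assoc, Nat.Div0.mod_add. reflexivity. }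
    replace (S t - 1) with t in Ho2 by lia.
    replace (S (S t) - 2) with t by lia. replace (S (S t) - 1) with (S t) by lia.
    split.
    + rewrite (modw (f o) (L ^ t) t (S t)); [apply Nat.Div0.mod_same | lia |].
      rewrite Ef, Ho2, Nat.mod_small; [reflexivity|apply Nat.pow_lt_mono_r; lia].
    + rewrite Ef, Ho2. apply powL_nz.
Qed.
End Ar.

Section W.
Open Scope nat_scope.

Variable L : nat.
Hypothesis HL : 4 <= L.
Variable nk : nat -> nat.
Hypothesis Hnk : forall k, nk k <= L ^ (k + 3).

Definition a k := L ^ (3 * k + 3).
Definition P k := L ^ (k + 2).
Definition X k := a k + nk k.
Definition inW k j := a k <= j < X k.

Lemma L2 : 2 <= L. Proof. lia. Qed.

Lemma a_mono k1 k2 : k1 <= k2 -> a k1 <= a k2.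
Proof. intros H. unfold a. apply Nat.pow_le_mono_r; lia. Qed.

Lemma nk_le_a k : nk k <= a k.
Proof. eapply Nat.le_trans; [apply Hnk|]. unfold a. apply Nat.pow_le_mono_r; lia. Qed.

Lemma a_pos k : 1 <= a k.
Proof. unfold a. assert (H := powL_nz L L2 (3 * k + 3)). lia. Qed.

Lemma grow k : 2 * L * X k <= a (S k).
Proof.
  unfold X. assert (H := nk_le_a k).
  assert (E : a (S k) = L ^ 3 * a k) by (unfold a; rewrite <- Nat.pow_add_r; f_equal; lia).
  rewrite E. assert (4 * L <= L ^ 3) by (simpl; nia). nia.
Qed.

Lemma growmono k1 k2 : k1 < k2 -> 2 * L * X k1 <= a k2.
Proof.
  intros H. induction k2 as [|k2 IH]; [lia|].
  destruct (Nat.eq_dec k1 k2) as [->|Hne]; [apply grow|].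
  assert (H1 := IH ltac:(lia)). assert (H2 := grow k2). unfold X in *.
  assert (a k2 <= 2 * L * (a k2 + nk k2)) by nia. lia.
Qed.

Lemma inW_unique k1 k2 j : inW k1 j -> inW k2 j -> k1 = k2.
Proof.
  unfold inW. intros H1 H2.
  destruct (Nat.lt_trichotomy k1 k2) as [H|[H|H]]; auto.
  - assert (G := growmono _ _ H). nia.
  - assert (G := growmono _ _ H). nia.
Qed.

Lemma gap_notW k j : X k <= j < a (S k) -> forall k', ~ inW k' j.
Proof.
  unfold inW. intros [H1 H2] k' [H3 H4].
  destruct (Nat.lt_trichotomy k' k) as [H|[H|H]].
  - assert (G := growmono _ _ H). unfold X in *. nia.
  - subst. lia.
  - assert (a (S k) <= a k') by (apply a_mono; lia). lia.
Qed.

Lemma pre_notW j : j < a 0 -> forall k', ~ inW k' j.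
Proof. unfold inW. intros H k' [H1 H2]. assert (a 0 <= a k') by (apply a_mono; lia). lia. Qed.

Definition w (j : nat) : nat :=
  match excluded_middle_informative (exists k, inW k j) with
  | left H => let k := proj1_sig (constructive_indefinite_description _ H) in
              L ^ 5 + letter L ((j - a k) mod P k)
  | right _ => letter L j
  end.

Lemma w_in k j : inW k j -> w j = L ^ 5 + letter L ((j - a k) mod P k).
Proof.
  intros H. unfold w. destruct excluded_middle_informative as [H'|H'].
  - destruct constructive_indefinite_description as [k' Hk']. simpl.
    rewrite (inW_unique _ _ _ Hk' H). reflexivity.
  - exfalso. apply H'. exists k. exact H.
Qed.

Lemma w_out j : (forall k, ~ inW k j) -> w j = letter L j.
Proof.
  intros H. unfold w. destruct excluded_middle_informative as [H'|H'].
  - destruct H' as [k Hk]. exfalso. exact (H k Hk).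
  - reflexivity.
Qed.

Lemma w_lt j : w j < 2 * L ^ 5.
Proof.
  unfold w. destruct excluded_middle_informative;
  [ match goal with |- _ + letter L ?x < _ => assert (H := letter_lt L L2 x) end
  | assert (H := letter_lt L L2 j)]; lia.
Qed.

Lemma mixed k j j' : inW k j -> (forall k', ~ inW k' j') -> w j <> w j'.
Proof.
  intros H1 H2. rewrite (w_in k j H1), (w_out j' H2).
  assert (H := letter_lt L L2 j'). lia.
Qed.

Section Run.
Variables s e p : nat.
Hypothesis Hp : 1 <= p.
Hypothesis Hps : p <= s.
Hypothesis Hrun : forall j, s <= j < e -> w j = w (j - p).

Lemma typ j k : s <= j < e -> inW k j -> exists k', inW k' (j - p).
Proof.
  intros Hj Hk. destruct (classic (exists k', inW k' (j - p))) as [H|H]; auto.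
  exfalso. apply (mixed k j (j - p) Hk).
  - intros k' Hk'. apply H. exists k'. exact Hk'.
  - apply Hrun. exact Hj.
Qed.

Lemma typ2 j k : s <= j < e -> inW k (j - p) -> exists k', inW k' j.
Proof.
  intros Hj Hk. destruct (classic (exists k', inW k' j)) as [H|H]; auto.
  exfalso. apply (mixed k (j - p) j Hk).
  - intros k' Hk'. apply H. exists k'. exact Hk'.
  - symmetry. apply Hrun. exact Hj.
Qed.

Lemma BG s' l : (forall j, s' <= j < s' + l -> s <= j < e /\ forall k, ~ inW k j) -> L * l <= p.
Proof.
  intros Hall. destruct (val_exists L L2 p Hp) as [t [Ht1 Ht2]].
  apply (piece L L2 p t s' l (fun j => j) (fun j => j - p) Ht1 Ht2).
  intros j Hj. destruct (Hall j Hj) as [Hj1 Hj2].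
  split; [exists 0; lia|]. split; [exists 0; lia|].
  assert (Hout : forall k, ~ inW k (j - p)).
  { intros k Hk. destruct (typ2 j k Hj1 Hk) as [k' Hk']. exact (Hj2 k' Hk'). }
  rewrite <- (w_out j Hj2), <- (w_out (j - p) Hout). apply Hrun. exact Hj1.
Qed.

Lemma SW k s' l : (forall j, s' <= j < s' + l -> s <= j < e /\ inW k j /\ inW k (j - p)) ->
  p mod P k <> 0 -> L * l <= p.
Proof.
  intros Hall HPk. destruct (val_exists L L2 p Hp) as [t [Ht1 Ht2]].
  assert (Htk : S t <= k + 2).
  { destruct (Nat.le_gt_cases (S t) (k + 2)) as [H|H]; auto.
    exfalso. apply HPk. unfold P. apply (modw0 L L2 p (k + 2) t); [lia|exact Ht1]. }
  apply (piece L L2 p t s' l (fun j => (j - a k) mod P k) (fun j => (j - p - a k) mod P k) Ht1 Ht2).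
  intros j Hj. destruct (Hall j Hj) as [Hj1 [Hj2 Hj3]].
  assert (EP : P k = L ^ S t * L ^ (k + 2 - S t)) by (unfold P; rewrite <- Nat.pow_add_r; f_equal; lia).
  assert (Ea : a k = L ^ S t * L ^ (3 * k + 3 - S t)) by (unfold a; rewrite <- Nat.pow_add_r; f_equal; lia).
  assert (HPnz : P k <> 0) by (unfold P; apply powL_nz; exact L2).
  unfold inW in Hj2, Hj3.
  split; [|split].
  - assert (D := Nat.div_mod (j - a k) (P k) HPnz).
    exists (L ^ (k + 2 - S t) * ((j - a k) / P k) + L ^ (3 * k + 3 - S t)).
    set (Q := (j - a k) / P k) in *. set (R := (j - a k) mod P k) in *.
    clearbody Q R. rewrite EP, Ea in *. lia.
  - assert (D := Nat.div_mod (j - p - a k) (P k) HPnz).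
    exists (L ^ (k + 2 - S t) * ((j - p - a k) / P k) + L ^ (3 * k + 3 - S t)).
    set (Q := (j - p - a k) / P k) in *. set (R := (j - p - a k) mod P k) in *.
    clearbody Q R. rewrite EP, Ea in *. lia.
  - assert (E1 := w_in k j Hj2). assert (E2 := w_in k (j - p) Hj3).
    assert (E3 := Hrun j Hj1). simpl. lia.
Qed.

Lemma le_2L x : x <= 2 * L * x.
Proof. assert (1 <= 2 * L) by lia. rewrite <- (Nat.mul_1_l x) at 1. apply Nat.mul_le_mono_r. exact H. Qed.

Lemma le_L x : x <= L * x.
Proof. rewrite <- (Nat.mul_1_l x) at 1. apply Nat.mul_le_mono_r. lia. Qed.

Lemma X_lt_next k : X k < a (S k).
Proof. assert (H := grow k). assert (H0 := le_L (X k)). assert (1 <= X k) by (unfold X; assert (H1 := a_pos k); lia). lia. Qed.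

Lemma notW_before k : forall k', ~ inW k' (a k - 1).
Proof.
  destruct k as [|m].
  - apply pre_notW. assert (H := a_pos 0). lia.
  - apply (gap_notW m). assert (H := X_lt_next m). lia.
Qed.

Lemma runs_main : L * (e - s) <= 3 * p \/ exists k, e - s + p <= nk k /\ P k <= p.
Proof.
  destruct (classic (exists j k, s <= j < e /\ inW k j /\ inW k (j - p))) as [[j0 [k [Hj0 [Hk1 Hk2]]]] | Hno].
  -
    unfold inW in Hk1, Hk2.
    assert (He : e <= X k).
    { destruct (Nat.le_gt_cases e (X k)) as [H|H]; auto. exfalso.
      assert (Hj : s <= X k < e) by lia.
      apply (mixed k (X k - p) (X k)).
      - unfold inW. lia.
      - apply (gap_notW k). assert (G := X_lt_next k). lia.
      - symmetry. apply Hrun. exact Hj. }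
    assert (Hs : a k + p <= s).
    { destruct (Nat.le_gt_cases (a k + p) s) as [H|H]; auto. exfalso.
      assert (Ha := a_pos k).
      assert (Hj : s <= a k + p - 1 < e) by lia.
      apply (mixed k (a k + p - 1) (a k + p - 1 - p)).
      - unfold inW. lia.
      - replace (a k + p - 1 - p) with (a k - 1) by lia. apply notW_before.
      - apply Hrun. exact Hj. }
    destruct (Nat.eq_dec (p mod P k) 0) as [H0|H0].
    + right. exists k. split; [unfold X in *; lia|].
      apply Nat.Div0.mod_divides in H0. destruct H0 as [c Hc].
      destruct c; [lia|]. assert (P k <= P k * S c) by (rewrite <- (Nat.mul_1_r (P k)) at 1; apply Nat.mul_le_mono_l; lia). lia.
    + left. assert (L * (e - s) <= p); [|lia].
      apply (SW k s (e - s)); auto. intros j Hj. unfold inW. lia.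
  - destruct (classic (exists j k, s <= j < e /\ inW k j)) as [[j0 [k [Hj0 Hk]]] | Hnone].
    + destruct (typ j0 k Hj0 Hk) as [k' Hk'].
      assert (Hkk : k' <> k) by (intro; subst; apply Hno; exists j0, k; auto).
      assert (Hlt : k' < k).
      { destruct (Nat.lt_trichotomy k' k) as [H|[H|H]]; [exact H|contradiction|].
        exfalso. assert (G := growmono _ _ H). assert (G2 := le_2L (X k)). unfold inW, X in *. lia. }
      destruct k as [|m]; [lia|].
      assert (HXk := X_lt_next (S m)). assert (Gm := grow m). assert (Gk := grow (S m)).
      assert (Hnka := nk_le_a (S m)).
      unfold inW in Hk. unfold inW in Hk'.
      assert (Hsm : X m <= s).
      { destruct (Nat.le_gt_cases (X m) s) as [H|H]; auto. exfalso.
        assert (B := BG (X m) (a (S m) - X m)).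
        assert (L * (a (S m) - X m) <= p).
        { apply B. intros j Hj. split; [lia|]. apply (gap_notW m). lia. }
        assert (4 * (a (S m) - X m) <= L * (a (S m) - X m)) by (apply Nat.mul_le_mono_r; lia).
        assert (8 * X m <= 2 * L * X m) by (assert (4 * X m <= L * X m) by (apply Nat.mul_le_mono_r; lia); lia).
        unfold X in *. lia. }
      assert (Hek : e <= a (S (S m))).
      { destruct (Nat.le_gt_cases e (a (S (S m)))) as [H|H]; auto. exfalso.
        assert (B := BG (X (S m)) (a (S (S m)) - X (S m))).
        assert (L * (a (S (S m)) - X (S m)) <= p).
        { apply B. intros j Hj. split; [lia|]. apply (gap_notW (S m)). lia. }
        assert (4 * (a (S (S m)) - X (S m)) <= L * (a (S (S m)) - X (S m))) by (apply Nat.mul_le_mono_r; lia).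
        assert (8 * X (S m) <= 2 * L * X (S m)) by (assert (4 * X (S m) <= L * X (S m)) by (apply Nat.mul_le_mono_r; lia); lia).
        unfold X in *. lia. }
      assert (H1 : L * (a (S m) - s) <= p).
      { apply (BG s). intros j Hj. split; [lia|]. apply (gap_notW m). lia. }
      assert (H3 : L * (e - X (S m)) <= p).
      { apply (BG (X (S m))). intros j Hj. split; [unfold X in *; lia|]. apply (gap_notW (S m)). lia. }
      set (s2 := Nat.max s (a (S m))). set (e2 := Nat.min e (X (S m))).
      assert (H2 : L * (e2 - s2) <= p).
      { destruct (Nat.le_gt_cases e2 s2) as [H|H]; [replace (e2 - s2) with 0 by lia; lia|].
        assert (Hj1 : s <= s2 < e) by lia.
        assert (Hin1 : inW (S m) s2) by (unfold inW; lia).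
        destruct (typ s2 (S m) Hj1 Hin1) as [k1 Hk1].
        assert (Hk1ne : k1 <> S m) by (intro; subst; apply Hno; exists s2, (S m); auto).
        unfold inW in Hk1, Hin1.
        assert (Hk1lt : k1 < S m).
        { destruct (Nat.lt_trichotomy k1 (S m)) as [H'|[H'|H']]; [exact H'|contradiction|].
          exfalso. assert (G := growmono _ _ H'). assert (G2 := le_2L (X (S m))). unfold X in *. lia. }
        assert (He2 : e2 - p <= X k1).
        { destruct (Nat.le_gt_cases (e2 - p) (X k1)) as [H'|H']; auto. exfalso.
          assert (Hj2 : s <= X k1 + p < e) by lia.
          apply (mixed (S m) (X k1 + p) (X k1 + p - p)).
          - unfold inW. lia.
          - replace (X k1 + p - p) with (X k1) by lia. apply (gap_notW k1).
            assert (G := X_lt_next k1). lia.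
          - apply Hrun. exact Hj2. }
        assert (G := growmono _ _ Hk1lt).
        assert (L * (e2 - s2) <= L * nk k1) by (apply Nat.mul_le_mono_l; unfold X in *; lia).
        assert (L * nk k1 <= L * X k1) by (apply Nat.mul_le_mono_l; unfold X; lia).
        assert (X k1 <= L * X k1) by apply le_L.
        lia. }
      left.
      assert (Hsum : e - s <= (a (S m) - s) + (e2 - s2) + (e - X (S m))) by lia.
      assert (Hm : L * (e - s) <= L * ((a (S m) - s) + (e2 - s2) + (e - X (S m)))) by (apply Nat.mul_le_mono_l; exact Hsum).
      rewrite !Nat.mul_add_distr_l in Hm. lia.
    + left. assert (L * (e - s) <= p); [|lia].
      apply (BG s (e - s)). intros j Hj. split; [lia|].
      intros k Hk. apply Hnone. exists j, k. split; [lia|exact Hk].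
Qed.

End Run.
End W.

Section Fin.
Open Scope nat_scope.
Variable L : nat.
Hypothesis HL : 4 <= L.
Variable nk : nat -> nat.
Hypothesis Hnk : forall k, nk k <= L ^ (k + 3).

Lemma fp_bound i n p : fractional_power_at (w L nk) i n p ->
  L * (n - p) <= 3 * p \/ exists k, n <= nk k /\ P L k <= p.
Proof.
  intros [Hp [Hpn Hj]].
  assert (Hrun : forall j, i + p <= j < i + n -> w L nk j = w L nk (j - p)).
  { intros j Hj'. replace j with (i + (j - i)) by lia.
    replace (i + (j - i) - p) with (i + (j - i) - p) by lia. apply Hj; lia. }
  destruct (runs_main L HL nk Hnk (i + p) (i + n) p Hp ltac:(lia) Hrun) as [H|[k [H1 H2]]].
  - left. replace (n - p) with (i + n - (i + p)) by lia. exact H.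
  - right. exists k. split; [lia|exact H2].
Qed.

Lemma window_fp k : 1 <= P L k <= nk k -> fractional_power_at (w L nk) (a L k) (nk k) (P L k).
Proof.
  intros [H1 H2]. split; [exact H1|]. split; [exact H2|].
  intros j Hj1 Hj2.
  assert (HPnz : P L k <> 0) by lia.
  rewrite (w_in L HL nk Hnk k) by (unfold inW, X; lia).
  rewrite (w_in L HL nk Hnk k) by (unfold inW, X; lia).
  replace (a L k + j - a L k) with ((j - P L k) + 1 * P L k) by lia.
  replace (a L k + j - P L k - a L k) with (j - P L k) by lia.
  rewrite Nat.Div0.mod_add. reflexivity.
Qed.
End Fin.

Lemma nat_above r : exists N : nat, r < INR N.
Proof.
  destruct (archimed r) as [H _].
  destruct (Z_le_gt_dec 0 (up r)) as [Hz|Hz].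
  - exists (Z.to_nat (up r)). rewrite INR_IZR_INZ, Z2Nat.id by exact Hz. exact H.
  - exists 0%nat. simpl. apply Z.gt_lt, IZR_lt in Hz. lra.
Qed.

Lemma floor_props x : 1 <= x -> exists m : nat, INR m <= x /\ x - 1 < INR m.
Proof.
  intros Hx. destruct (base_Int_part x) as [H1 H2].
  assert (Hz : (0 <= Int_part x)%Z).
  { assert (IZR (Int_part x) > -1) by lra. apply Z.lt_succ_r. apply lt_IZR.
    rewrite succ_IZR. lra. }
  exists (Z.to_nat (Int_part x)). rewrite INR_IZR_INZ, Z2Nat.id by exact Hz. lra.
Qed.

Theorem theorem2 (alpha : R) (halpha : 1 < alpha) :
  exists (k : nat) (w : nat -> nat),
    (forall i : nat, (w i < k)%nat) /\ critical_exponent_eq w alpha.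
Proof.
  destruct (nat_above (alpha + 3 / (alpha - 1))) as [N HN].
  assert (Hpos : 0 < 3 / (alpha - 1)) by (apply Rdiv_lt_0_compat; lra).
  set (L := (N + 4)%nat).
  assert (HL : (4 <= L)%nat) by (unfold L; lia).
  assert (HLr : INR L = INR N + 4) by (unfold L; rewrite plus_INR; simpl; lra).
  assert (HLa : alpha <= INR L) by lra.
  assert (HL3 : 3 <= INR L * (alpha - 1)).
  { assert (3 / (alpha - 1) <= INR L) by lra.
    apply (Rmult_le_compat_r (alpha - 1)) in H; [|lra].
    unfold Rdiv in H. rewrite Rmult_assoc, Rinv_l in H by lra. lra. }
  assert (HLpos : 0 < INR L) by lra.
  assert (Hfl : forall k : nat, exists m : nat, INR m <= alpha * INR (L ^ (k + 2)) /\ alpha * INR (L ^ (k + 2)) - 1 < INR m).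
  { intros k. apply floor_props. assert (1 <= INR (L ^ (k + 2))).
    { rewrite <- INR_1. apply le_INR. assert (L ^ (k + 2) <> 0)%nat by (apply Nat.pow_nonzero; lia). lia. }
    nra. }
  destruct (choice _ Hfl) as [nk Hnk0].
  assert (HPge : forall k, (P L k <= nk k)%nat).
  { intros k. destruct (Hnk0 k) as [_ H2]. apply Nat.lt_succ_r. apply INR_lt. rewrite S_INR.
    unfold P. assert (1 <= INR (L ^ (k + 2))).
    { rewrite <- INR_1. apply le_INR. assert (L ^ (k + 2) <> 0)%nat by (apply Nat.pow_nonzero; lia). lia. }
    nra. }
  assert (Hnk : forall k, (nk k <= L ^ (k + 3))%nat).
  { intros k. apply INR_le. destruct (Hnk0 k) as [H1 _].
    replace (L ^ (k + 3))%nat with (L * L ^ (k + 2))%nat by (replace (k + 3)%nat with (S (k + 2)) by lia; reflexivity).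
    rewrite mult_INR. assert (0 <= INR (L ^ (k + 2))) by apply pos_INR. nra. }
  exists (2 * L ^ 5)%nat, (w L nk). split.
  { intros i. apply w_lt. exact HL. }
  split.
  - intros r [i [n [p [Hfp ->]]]].
    assert (Hp : (1 <= p)%nat) by (destruct Hfp; lia).
    assert (Hpn : (p <= n)%nat) by (destruct Hfp as [_ [H _]]; lia).
    assert (HpR : 0 < INR p) by (apply lt_0_INR; lia).
    unfold Rdiv. apply (Rmult_le_reg_r (INR p)); [exact HpR|].
    rewrite Rmult_assoc, Rinv_l, Rmult_1_r by lra.
    destruct (fp_bound L HL nk Hnk i n p Hfp) as [H|[k [H1 H2]]].
    + apply le_INR in H. rewrite !mult_INR, minus_INR in H by exact Hpn.
      simpl in H. nra.
    + apply le_INR in H1. apply le_INR in H2. destruct (Hnk0 k) as [H3 _].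
      unfold P in H2. nra.
  - intros b Hb. apply Rnot_lt_le. intros Hlt.
    destruct (nat_above (1 / (alpha - b))) as [K HK].
    assert (HPK := HPge K).
    assert (HP1 : (1 <= P L K)%nat) by (unfold P; assert (L ^ (K + 2) <> 0)%nat by (apply Nat.pow_nonzero; lia); lia).
    assert (Hfp := window_fp L HL nk Hnk K (conj HP1 HPK)).
    assert (Hle : INR (nk K) / INR (P L K) <= b) by (apply Hb; exists (a L K), (nk K), (P L K); split; [exact Hfp|reflexivity]).
    assert (HPpos : 0 < INR (P L K)) by (apply lt_0_INR; unfold P; assert (L ^ (K + 2) <> 0)%nat by (apply Nat.pow_nonzero; lia); lia).
    assert (HKP : INR K <= INR (P L K)).
    { apply le_INR. unfold P. assert (K < L ^ K)%nat by (apply Nat.pow_gt_lin_r; lia).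
      assert (L ^ K <= L ^ (K + 2))%nat by (apply Nat.pow_le_mono_r; lia). lia. }
    destruct (Hnk0 K) as [_ H2]. fold (P L K) in H2.
    assert (Hnb : INR (nk K) <= b * INR (P L K)).
    { unfold Rdiv in Hle. apply (Rmult_le_compat_r (INR (P L K))) in Hle; [|lra].
      rewrite Rmult_assoc, Rinv_l, Rmult_1_r in Hle by lra. exact Hle. }
    assert (Hab : 0 < alpha - b) by lra.
    assert (1 < (alpha - b) * INR (P L K)).
    { assert (1 / (alpha - b) < INR (P L K)) by lra.
      apply (Rmult_lt_compat_l (alpha - b)) in H; [|lra].
      unfold Rdiv in H. rewrite <- Rmult_assoc, Rmult_1_r, Rinv_r in H by lra. exact H. }
    nra.
Qed.
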